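(* Let $T$ be a finite tree, and let $\Delta$ and $\Sigma$ be orbits of the action of $\mathrm{Aut}(T)$ on the vertex set of $T$. For an orbit $\Theta$, let $T_\Theta$ be the subgraph of $T$ consisting of all vertices and edges of $T$ that lie on the path from $\alpha$ to $\beta$ for some $\alpha,\beta\in\Theta$. If some vertex $\gamma\in\Sigma$ is a vertex of $T_\Delta$, then $T_\Sigma$ is a subtree of $T_\Delta$.
   Context: $\mathrm{Aut}(T)$ is the automorphism group of $T$. *)

(* Defs.v *)
From mathcomp Require Import all_boot all_fingroup.
Set Implicit Arguments. Unset Strict Implicit. Unset Printing Implicit Defensive.

Definition simple_graph (V : finType) (e : rel V) : Prop :=
  symmetric e /\ irreflexive e.

Definition spath (V : finType) (e : rel V) (a b : V) (p : seq V) : Prop :=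
  [/\ path e a p, last a p = b & uniq (a :: p)].

Definition has_cycle (V : finType) (e : rel V) : Prop :=
  exists (a : V) (p : seq V),
    [/\ path e a p, uniq (a :: p), 2 <= size p & e (last a p) a].

Definition is_tree (V : finType) (e : rel V) : Prop :=
  [/\ simple_graph e, (forall x y : V, connect e x y) & ~ has_cycle e].

Definition is_aut (V : finType) (e : rel V) (f : {perm V}) : bool :=
  [forall x : V, forall y : V, e (f x) (f y) == e x y].

Definition aut_orbit (V : finType) (e : rel V) (x : V) : {set V} :=
  [set y | [exists f : {perm V}, is_aut e f && (f x == y)]].

Definition is_aut_orbit (V : finType) (e : rel V) (O : {set V}) : Prop :=
  exists x : V, O = aut_orbit e x.

Definition span_vertex (V : finType) (e : rel V) (Th : {set V}) (v : V) : Prop :=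
  exists (a b : V) (p : seq V),
    [/\ a \in Th, b \in Th, spath e a b p & v \in a :: p].

Definition span_edge (V : finType) (e : rel V) (Th : {set V}) (u w : V) : Prop :=
  exists (a b : V) (p : seq V),
    [/\ a \in Th, b \in Th, spath e a b p &
        infix [:: u; w] (a :: p) || infix [:: w; u] (a :: p)].

Definition span_subgraph (V : finType) (e : rel V) (S D : {set V}) : Prop :=
  (forall v, span_vertex e S v -> span_vertex e D v) /\
  (forall u w, span_edge e S u w -> span_edge e D u w).

(* Main.v *)
Require Import Defs.
From mathcomp Require Import all_boot all_fingroup.

Section Side.
Variables (V : finType) (e : rel V).
Hypothesis esym : symmetric e.
Hypothesis acyc : ~ has_cycle e.
Variables (u w : V).
Hypothesis uw : u != w.
Hypothesis euw : e u w.

Definition e' : rel V := fun x y => e x y && ~~ (((x==u)&&(y==w)) || ((x==w)&&(y==u))).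

Lemma e'sym : symmetric e'.
Proof.
move=> x y; rewrite /e' esym; congr (_ && ~~ _).
by case: (x == u); case: (y == w); case: (x == w); case: (y == u).
Qed.

Definition sd x := connect e' x u.

Lemma sd_conn x y : connect e' x y -> sd x = sd y.
Proof.
move=> cxy; rewrite /sd; apply/idP/idP => h.
  by apply: connect_trans h; rewrite (sym_connect_sym e'sym).
by apply: connect_trans cxy h.
Qed.

Lemma C x q : path e x q -> (u \notin x::q) || (w \notin x::q) -> connect e' x (last x q).
Proof.
elim: q x => [|y q IH] x /=; first by rewrite connect0.
case/andP=> exy pq hm.
apply: connect_trans (connect1 _) (IH y pq _).
  rewrite /e' exy /=.
  case/orP: hm => /negP h; apply/negP => /orP[] /andP[/eqP ex /eqP ey];
    apply: h; subst; by rewrite !inE eqxx ?orbT.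
move: hm; rewrite !inE; case/orP=> h; apply/orP; [left|right];
  by apply: contra h => ->; rewrite orbT.
Qed.

Lemma edge_sides x y : e x y -> sd x != sd y -> ((x==u)&&(y==w)) || ((x==w)&&(y==u)).
Proof.
move=> exy; apply: contraR => h.
by rewrite (@sd_conn x y) // connect1 // /e' exy h.
Qed.

Lemma A : ~~ connect e' u w.
Proof.
apply/negP => /connectP [p pp lp].
case: (shortenP pp) lp => q pq uq _ lq.
apply: acyc; exists u, q; split => //.
- by apply: sub_path pq => a b /andP[].
- move: pq lq; case: q uq => [|a [|b q]] //= _.
  + by move=> _ h; move: uw; rewrite h eqxx.
  + by rewrite /e' => /andP[/andP[_ h] _] ha; rewrite ha !eqxx in h.
- by rewrite -lq esym.
Qed.

Lemma sdu : sd u. Proof. exact: connect0. Qed.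
Lemma sdw : sd w = false.
Proof. by apply/negbTE; rewrite /sd (sym_connect_sym e'sym) A. Qed.

Lemma infix_lift (s t : seq V) x : infix s t -> infix s (x :: t).
Proof. by move=> h; rewrite infix_consl h orbT. Qed.

Lemma cross x q : path e x q -> sd x != sd (last x q) ->
  infix [::u;w] (x::q) || infix [::w;u] (x::q).
Proof.
elim: q x => [|y q IH] x; first by rewrite /= eqxx.
move=> /andP[exy pq] hs; simpl in hs.
have [exy'|nxy] := eqVneq (sd x) (sd y).
  rewrite exy' in hs; have := IH y pq hs.
  by case/orP => h; apply/orP; [left|right]; apply: infix_lift.
case/orP: (edge_sides _ _ exy nxy) => /andP[/eqP -> /eqP ->].
  by rewrite (prefix_infix [:: u; w] q).
by rewrite (prefix_infix [:: w; u] q) orbT.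
Qed.

Lemma D x q z : path e x q -> uniq (x::q) -> z \in x::q -> sd x != sd z ->
  sd (last x q) = sd z.
Proof.
elim: q x => [|y q IH] x /=.
  by rewrite inE => _ _ /eqP ->; rewrite eqxx.
case/andP=> exy pq /andP[xn uq].
rewrite inE; case/orP => [/eqP ->|zin]; first by rewrite eqxx.
have [exy'|nxy] := eqVneq (sd x) (sd y).
  by rewrite exy'; apply: IH.
have hx : (x == u) || (x == w).
  by case/orP: (edge_sides _ _ exy nxy) => /andP[-> _]; rewrite ?orbT.
have hc : connect e' y (last y q).
  apply: (C y q pq); case/orP: hx => /eqP hx; subst x; by rewrite xn ?orbT.
rewrite -(sd_conn _ _ hc).
by move: nxy; case: (sd x); case: (sd y); case: (sd z).
Qed.

Lemma UC x q : path e x q -> uniq (x::q) ->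
  infix [::u;w] (x::q) || infix [::w;u] (x::q) -> sd x != sd (last x q).
Proof.
elim: q x => [|y q IH] x; first by move=> _ _ /=; rewrite !andbF.
move=> /andP[exy pq] /andP[xn uq] hin /=.
have [hxy|hxy] := boolP (((x==u)&&(y==w)) || ((x==w)&&(y==u))).
  have hc : connect e' y (last y q).
    apply: (C y q pq); case/orP: hxy => /andP[/eqP hx /eqP hy]; subst x y;
    by rewrite xn ?orbT.
  rewrite -(sd_conn _ _ hc).
  by case/orP: hxy => /andP[/eqP -> /eqP ->]; rewrite sdu sdw.
have exy' : sd x = sd y.
  by apply/eqP; apply: contraR hxy; apply: edge_sides.
rewrite exy'; apply: IH => //.
move: hin hxy; rewrite !infix_consl /=.
rewrite !(eq_sym u) !(eq_sym w).
by case: (x == u) (x == w) (y == u) (y == w) => [] [] [] [] /=; rewrite ?orbF.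
Qed.

End Side.
Set Implicit Arguments. Unset Strict Implicit.

Section Main.
Variables (V : finType) (e : rel V).

Lemma autP (f : {perm V}) : is_aut e f -> forall x y, e (f x) (f y) = e x y.
Proof. by move=> /forallP h x y; apply/eqP; have /forallP := h x; apply. Qed.

Lemma aut_comp (f g : {perm V}) : is_aut e f -> is_aut e g -> is_aut e (f * g).
Proof.
move=> hf hg; apply/forallP => x; apply/forallP => y.
by rewrite !permM (autP hg) (autP hf).
Qed.

Lemma aut_inv (f : {perm V}) : is_aut e f -> is_aut e f^-1.
Proof.
move=> hf; apply/forallP => x; apply/forallP => y.
by rewrite -(autP hf) !permKV.
Qed.

Lemma spath_map (f : {perm V}) a b p : is_aut e f -> spath e a b p ->
  spath e (f a) (f b) (map f p).
Proof.
move=> hf [pp lp up]; split.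
- by rewrite path_map; rewrite (eq_path (e' := e)) // => x y /=; rewrite autP.
- by rewrite last_map lp.
- by rewrite -(map_cons f) map_inj_uniq //; apply: perm_inj.
Qed.

Lemma path_edge x q u w : path e x q -> infix [:: u; w] (x :: q) -> e u w.
Proof.
elim: q x => [|y q IH] x; first by move=> _ /=; rewrite !andbF.
move=> /andP[exy pq]; rewrite infix_consl.
case/orP => [|h]; last exact: (IH y pq h).
by rewrite /= => /andP[/eqP -> /andP[/eqP -> _]].
Qed.

Lemma pred_exists (x : V) p v : v \in p -> exists t, infix [:: t; v] (x :: p).
Proof.
elim: p x => [|y p IH] x //; rewrite inE; case/orP => [/eqP ->|h].
  by exists x; rewrite infix_consl /= !eqxx /= prefix0s.
by have [t ht] := IH y h; exists t; rewrite infix_consl ht orbT.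
Qed.

End Main.

Lemma side_pick (V : finType) (e : rel V) (esym : symmetric e) (Dl : {set V}) u w s :
  span_vertex e Dl s -> exists2 x, x \in Dl & sd V e u w x = sd V e u w s.
Proof.
move=> [a [b [p [aD bD [pp lp up] sin]]]].
have [h|h] := eqVneq (sd V e u w a) (sd V e u w s); first by exists a.
by exists b => //; rewrite -lp (@D V e esym u w a p s pp up sin h).
Qed.

Lemma edge_span (V : finType) (e : rel V) (T : is_tree e) (Dl : {set V}) s1 s2 p u w :
  span_vertex e Dl s1 -> span_vertex e Dl s2 -> spath e s1 s2 p ->
  infix [:: u; w] (s1 :: p) -> span_edge e Dl u w.
Proof.
case: T => [[esym eirr] conn acyc] h1 h2 [pp lp up] hin.
have euw : e u w by apply: path_edge pp hin.
have uw : u != w by apply: contraTneq euw => ->; rewrite eirr.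
have hs := @UC V e esym acyc u w uw euw _ _ pp up (introT orP (or_introl hin)).
rewrite lp in hs.
have [x xD hx] := @side_pick V e esym Dl u w s1 h1.
have [y yD hy] := @side_pick V e esym Dl u w s2 h2.
have /connectP [q0 pq0 lq0] := conn x y.
case: (shortenP pq0) lq0 => q pq uq _ lq.
exists x, y, q; split => //.
apply: (@cross V e esym u w x q pq).
by rewrite -lq hx hy.
Qed.

Theorem mainTheorem10 (V : finType) (e : rel V) (Delta Sigma : {set V}) :
  is_tree e ->
  is_aut_orbit e Delta -> is_aut_orbit e Sigma ->
  (exists2 g : V, g \in Sigma & span_vertex e Delta g) ->
  span_subgraph e Sigma Delta.
Proof.
move=> T [y0 ->] [x0 ->] [g gS [a [b [p [aD bD sp gin]]]]].
have Sin : forall s, s \in aut_orbit e x0 -> span_vertex e (aut_orbit e y0) s.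
  move=> s; rewrite inE => /existsP [f2 /andP [a2 /eqP f2s]].
  move: gS; rewrite inE => /existsP [f1 /andP [a1 /eqP f1g]].
  have ah : is_aut e (f1^-1 * f2) by apply: aut_comp => //; apply: aut_inv.
  have inD : forall z, z \in aut_orbit e y0 -> (f1^-1 * f2)%g z \in aut_orbit e y0.
    move=> z; rewrite !inE => /existsP [fz /andP [az /eqP fzz]].
    apply/existsP; exists (fz * (f1^-1 * f2))%g.
    by rewrite aut_comp //= permM fzz.
  exists ((f1^-1 * f2)%g a), ((f1^-1 * f2)%g b), (map (f1^-1 * f2)%g p).
  split; [exact: inD | exact: inD | exact: spath_map | ].
  rewrite -(map_cons (f1^-1 * f2)%g) -f2s.
  have -> : f2 x0 = (f1^-1 * f2)%g g by rewrite permM -f1g permK.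
  exact: map_f.
split.
  move=> v [a' [b' [p' [aS bS [pp lp up] vin]]]].
  move: vin; rewrite inE; case/orP => [/eqP ->|vin]; first exact: Sin.
  have [t ht] := pred_exists a' vin.
  have [a2 [b2 [q [aD2 bD2 sq hq]]]] :=
    edge_span T (Sin _ aS) (Sin _ bS) (And3 pp lp up) ht.
  exists a2, b2, q; split => //.
  by case/orP: hq => /mem_infix; apply; rewrite !inE eqxx ?orbT.
move=> u w [a' [b' [p' [aS bS sp' hq]]]].
case/orP: hq => hq.
  by have := edge_span T (Sin _ aS) (Sin _ bS) sp' hq.
have [a2 [b2 [q [aD2 bD2 sq hq2]]]] := edge_span T (Sin _ aS) (Sin _ bS) sp' hq.
by exists a2, b2, q; split => //; rewrite orbC.
Qed.
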